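(* Let $E$ be a graph satisfying Condition (K). Let $v\in E^0$ support at least two distinct return paths. Then the Cuntz Splice $E_C^v$ satisfies Condition (K).
   Context: A graph $E=(E^0,E^1,r,s)$ consists of countable sets $E^0$ (vertices) and $E^1$ (edges) and maps $r,s\colon E^1\to E^0$ (range and source). A path is a finite sequence $\mu=e_1\cdots e_n$ ($n\ge1$) of edges with $r(e_i)=s(e_{i+1})$; set $s(\mu)=s(e_1)$, $r(\mu)=r(e_n)$. A return path is a path $\mu=e_1\cdots e_n$ with $s(\mu)=r(\mu)$ and $r(e_i)\neq r(\mu)$ for $i<n$; a vertex $w$ supports $\mu$ if $s(\mu)=w$. $E$ satisfies Condition (K) if no vertex supports precisely one return path. The Cuntz Splice $E_C^v$ of $E$ at a vertex $v$ supporting at least two distinct return paths is the graph with vertex set $E^0\sqcup\{u_1,u_2\}$ and edge set $E^1\sqcup\{f_1,f_2,h_1,h_2,k_1,k_2\}$, where old edges keep their range and source, and $f_1\colon v\to u_1$, $f_2\colon u_1\to v$, $h_1\colon u_1\to u_1$, $h_2\colon u_1\to u_2$, $k_1\colon u_2\to u_1$, $k_2\colon u_2\to u_2$ (notation $e\colon a\to b$ means $s(e)=a$, $r(e)=b$). *)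

(* Defs.v *)
From Stdlib Require List.
From mathcomp Require Import all_boot.
Set Implicit Arguments. Unset Strict Implicit. Unset Printing Implicit Defensive.

Section Graphs.
Variables (V E : Type) (r s : E -> V).

Fixpoint composable (p : seq E) : Prop :=
  match p with
  | e :: ((e' :: _) as t) => r e = s e' /\ composable t
  | _ => True
  end.

Definition is_path (p : seq E) : Prop := p <> [::] /\ composable p.

Definition return_path_at (w : V) (p : seq E) : Prop :=
  is_path p /\
  (match p with e :: _ => s e = w | [::] => False end) /\
  exists (q : seq E) (e : E),
    p = rcons q e /\ r e = w /\ (forall x, List.In x q -> r x <> w).

Definition condition_K : Prop :=
  forall w : V, ~ (exists p, return_path_at w p /\
                         forall q, return_path_at w q -> q = p).

Definition two_return_paths (w : V) : Prop :=
  exists p q, return_path_at w p /\ return_path_at w q /\ p <> q.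

End Graphs.

Inductive splice_edge := f1 | f2 | h1 | h2 | k1 | k2.

Section Splice.
Variables (V E : Type) (r s : E -> V) (v : V).

Definition u1 : V + bool := inr false.
Definition u2 : V + bool := inr true.

Definition splice_s (e : E + splice_edge) : V + bool :=
  match e with
  | inl e => inl (s e)
  | inr f1 => inl v
  | inr f2 => u1
  | inr h1 => u1
  | inr h2 => u1
  | inr k1 => u2
  | inr k2 => u2
  end.

Definition splice_r (e : E + splice_edge) : V + bool :=
  match e with
  | inl e => inl (r e)
  | inr f1 => u1
  | inr f2 => inl v
  | inr h1 => u1
  | inr h2 => u2
  | inr k1 => u1
  | inr k2 => u2
  end.
End Splice.

(* Main.v *)
Require Import Defs.
From mathcomp Require Import all_boot.
From mathcomp Require Import zify.
Set Implicit Arguments. Unset Strict Implicit.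

Section Gen.
Variables (V E : Type) (r s : E -> V).

Lemma In_cat (x : E) a b : List.In x (a ++ b) -> List.In x a \/ List.In x b.
Proof. elim: a => [|y a IH] /=; first by right. case=> [->|H]; first by left; left.
case: (IH H) => H'; [left; right|right] => //. Qed.

Lemma In_cat2 (x : E) a b : List.In x a \/ List.In x b -> List.In x (a ++ b).
Proof. elim: a => [|y a IH] /=; first by case. case=> [[->|H]|H]; first by left.
- by right; apply: IH; left.
- by right; apply: IH; right. Qed.

Lemma composable_cat a e t : composable r s (a ++ e :: t) <->
  composable r s (rcons a e) /\ composable r s (e :: t).
Proof.
case: a => [|y a] /=; first by split; [move=> H; split|case].
elim: a y => [|z a IH] y /=.
- split; [move=> [H1 H2]; split; [split|]|move=> [[H1 _] H2]; split] => //.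
- split.
  + move=> [H1 /IH [H2 H3]]; split; [split|] => //.
  + move=> [[H1 H2] H3]; split => //; apply/IH; split => //.
Qed.

Lemma insert_loop w a e t l :
  return_path_at r s w (a ++ e :: t) -> t <> [::] -> s l = r e -> r l = r e ->
  return_path_at r s w (a ++ e :: l :: t) /\ a ++ e :: l :: t <> a ++ e :: t.
Proof.
move=> [[_ Hc] [Hh [q [e0 [Hq [He0 Hin]]]]]] Ht Hsl Hrl.
have [Hc1 Hc2] := proj1 (composable_cat a e t) Hc.
case/lastP: t Ht Hq Hc2 Hc Hh => [//|t0 el] _ Hq Hc2 Hc Hh.
move: Hq; rewrite -rcons_cons -rcons_cat => /rcons_inj [Hq1 Hq2].
subst q e0.
split; last first.
  move/(f_equal size); rewrite !size_rcons !size_cat /= !size_rcons; lia.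
split; [split|split].
- by case: a {Hc Hc1 Hh Hin}.
- apply/composable_cat; split => //.
  move: Hc2; case: (rcons t0 el) => [|y u] /=.
  + by move=> _; split.
  + by move=> [H1 H2]; split => //; split => //; rewrite Hrl.
- by move: Hh; clear; case: a.
- exists (a ++ e :: l :: t0), el; split; first by rewrite rcons_cat.
  split => // x /In_cat [H|[H|[H|H]]].
  + by apply: Hin; apply: In_cat2; left.
  + by apply: Hin; apply: In_cat2; right; left.
  + subst x; rewrite Hrl; apply: Hin; apply: In_cat2; right; left => //.
  + by apply: Hin; apply: In_cat2; right; right.
Qed.

Lemma dichot (P : E -> Prop) : (forall x, P x \/ ~ P x) -> forall q,
  (exists a y t, q = a ++ y :: t /\ P y) \/ (forall y, List.In y q -> ~ P y).
Proof.
move=> HP; elim=> [|x q IH]; first by right.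
case: (HP x) => Hx; first by left; exists [::], x, q.
case: IH => [[a [y [t [-> Hy]]]]|H].
- by left; exists (x :: a), y, t.
- by right => y /= [<-|/H].
Qed.

Lemma In_map {T : Type} (f : E -> T) y q : List.In y (map f q) -> exists x, y = f x /\ List.In x q.
Proof. elim: q => [|z q IH] //= [<-|/IH [x [-> H]]]; [exists z|exists x]; split => //; by [left|right]. Qed.

Lemma In_map2 {T : Type} (f : E -> T) x q : List.In x q -> List.In (f x) (map f q).
Proof. elim: q => [|z q IH] //= [->|H]; [left|right; apply: IH] => //. Qed.

End Gen.

Section Sp.
Variables (V E : Type) (r s : E -> V) (v : V).
Notation R := (splice_r r v).
Notation S := (splice_s s v).

Lemma composable_map p : composable R S (map inl p) <-> composable r s p.
Proof.
elim: p => [|x p IH] //=. case: p IH => [|y p] IH //=.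
split; move=> [H1 H2]; split.
- by case: H1.
- by apply/IH.
- by rewrite /= H1.
- by apply/IH.
Qed.

Lemma all_inl l : composable R S l -> (forall y, List.In y l -> exists z, R y = inl z) ->
  (match l with y :: _ => exists z, S y = inl z | [::] => True end) ->
  exists p, l = map inl p.
Proof.
elim: l => [|y l IH]; first by exists [::].
move=> Hc Hr Hs.
have [e Ey] : exists e, y = inl e.
  case: y Hc Hr Hs => [e|[]] Hc Hr Hs; first by exists e.
  all: try (case: (Hr _ (or_introl erefl)) => z Hz; discriminate Hz).
  all: try (case: Hs => z Hz; discriminate Hz).
subst y.
have [p ->] : exists p, l = map inl p.
  apply: IH.
  - by case: l Hc {Hr Hs} => // y l [].
  - by move=> y H; apply: Hr; right.
  - by case: l Hc {Hr Hs} => // y l [H _]; exists (r e); rewrite -H.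
by exists (e :: p).
Qed.

Lemma rp_fwd x p : return_path_at r s x p -> return_path_at R S (inl x) (map inl p).
Proof.
move=> [[Hne Hc] [Hh [q [e [Hq [He Hin]]]]]].
split; [split|split].
- by case: p Hne {Hc Hh Hq}.
- by apply/composable_map.
- by case: p Hh {Hne Hc Hq} => //= y _ ->.
- exists (map inl q), (inl e); split; first by rewrite Hq map_rcons.
  split; first by rewrite /= He.
  move=> y Hy; case: (In_map Hy) => z [Ey Hz]; subst y => /= H; apply: (Hin z Hz); by case: H.
Qed.

Lemma rp_bwd x p : return_path_at R S (inl x) (map inl p) -> return_path_at r s x p.
Proof.
move=> [[Hne Hc] [Hh [q [e [Hq [He Hin]]]]]].
split; [split|split].
- by case: p Hne {Hc Hh Hq}.
- by apply/composable_map.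
- by case: p Hh {Hne Hc Hq} => //= y _ [].
  move: Hq; clear Hne Hc Hh; case/lastP: p => [|p' el] Hq; first by case: q Hq {Hin}.
  rewrite map_rcons in Hq; move/rcons_inj: Hq => [Hq1 Hq2]; subst q e.
  exists p', el; split => //; split; first by case: He.
  by move=> y Hy Ey; apply: (Hin (inl y)); [apply: In_map2|rewrite /= Ey].
Qed.

End Sp.

Lemma inl_inj (A B : Type) : injective (@inl A B).
Proof. by move=> a b []. Qed.

Theorem proposition2p3 (V E : countType) (r s : E -> V) (v : V) :
  condition_K r s ->
  two_return_paths r s v ->
  condition_K (splice_r r v) (splice_s s v).
Proof.
move=> HK _ w [p0 [Hp0 U]].
case: w Hp0 U => [x|b] Hp0 U.
- have HpR := Hp0.
  move: Hp0 => [[Hne Hc] [Hh [q [e [Hq [He Hin]]]]]].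
  have HP : forall y, (exists b, splice_r r v y = inr b) \/ ~ (exists b, splice_r r v y = inr b).
    move=> y; case: (splice_r r v y) => [z|b]; [right; case=> b' H; discriminate H|left; by exists b].
  case: (dichot HP q) => [[a [y [t [Eq [b Hb]]]]]|Hall].
  + subst q. move: HpR; rewrite Hq rcons_cat rcons_cons => HpR.
    have [Hrp Hd] := insert_loop (l := if b then inr k2 else inr h1) HpR
      (ltac:(by case: t {Hq HpR Hin})) (ltac:(by rewrite Hb; case: b {Hb})) (ltac:(by rewrite Hb; case: b {Hb})).
    apply: Hd. by rewrite (U _ Hrp) Hq rcons_cat.
  + have [p Ep] : exists p, p0 = map inl p.
      apply: (@all_inl V E r s v) => //.
      * move=> y; rewrite Hq -cats1 => Hy; case: (In_cat Hy) => [H|[<-|[]]]; last by exists x.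
        case: (splice_r r v y) (Hall y H) => [z|b] Hy2; first by exists z.
        by exfalso; apply: Hy2; exists b.
      * by case: p0 Hh {Hne Hc Hq HpR U} => // y _ ->; exists x.
    rewrite Ep in HpR U.
    apply: (HK x); exists p; split; first exact: (@rp_bwd V E r s v _ _ HpR).
    move=> q' Hq'; apply: (inj_map (@inl_inj _ _)).
    exact: U _ (@rp_fwd V E r s v _ _ Hq').
- have Hsplit : forall l, return_path_at (splice_r r v) (splice_s s v) (inr b) l -> l = p0 := U.
  case: b Hsplit {U Hp0} => Hsplit.
  + have H1 : [:: @inr E splice_edge k2] = p0.
      apply: Hsplit. split; first by split.
      split; first by []. exists [::], (inr k2). split; first by [].
      split; first by []. by move=> y [].
    have H2 : [:: @inr E splice_edge k1; inr h2] = p0.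
      apply: Hsplit. split; first by split.
      split; first by []. exists [:: inr k1], (inr h2). split; first by [].
      split; first by []. move=> y [Hy|[]]. by rewrite -Hy.
    by rewrite -H2 in H1.
  + have H1 : [:: @inr E splice_edge h1] = p0.
      apply: Hsplit. split; first by split.
      split; first by []. exists [::], (inr h1). split; first by [].
      split; first by []. by move=> y [].
    have H2 : [:: @inr E splice_edge h2; inr k1] = p0.
      apply: Hsplit. split; first by split.
      split; first by []. exists [:: inr h2], (inr k1). split; first by [].
      split; first by []. move=> y [Hy|[]]. by rewrite -Hy.
    by rewrite -H2 in H1.
Qed.
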